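(* Let $N\ge4$ and $\kappa\in\mathbb R$ be such that the $(N-1)^2\times(N-1)^2$ matrix $\tilde A=M\otimes M^{-1}+M^{-1}\otimes M+2I\otimes I+\kappa(I\otimes M+M\otimes I)$ is nonsingular, and let $A=M\otimes S+S\otimes M+2I\otimes I+\kappa(I\otimes M+M\otimes I)$. Then the eigenspace $\{\boldsymbol v\in\mathbb R^{(N-1)^2}:\tilde A^{-1}A\boldsymbol v=\boldsymbol v\}$ of $\tilde A^{-1}A$ associated with the eigenvalue $1$ has dimension $(N-3)^2$.
   Context: $M,S$ are the $(N-1)\times(N-1)$ matrices $M_{mn}=(\psi_{n+1},\psi_{m+1})$, $S_{mn}=(\phi_n',\phi_m')$ with $(\cdot,\cdot)$ the $L^2(-1,1)$ inner product, $L_n$ the Legendre polynomial of degree $n$, $P_n^{(-1,-1)}=\frac{n-1}{2(2n-1)}(L_n-L_{n-2})$ ($n\ge2$), $\psi_{m+1}=\frac{\sqrt{2(2m+1)}}{m}P_{m+1}^{(-1,-1)}$, $\phi_m=\sqrt{\frac{2m+1}{2}}L_m$. $I$ is the $(N-1)\times(N-1)$ identity and $\otimes$ the Kronecker product. ($A$ is the matrix of the divergence-free spectral Galerkin discretisation of the 2D curl-curl problem $\nabla\times\nabla\times\boldsymbol u+\kappa\boldsymbol u=\boldsymbol f$ in the basis $\{\boldsymbol\Phi_{m,n}\}$, and $\tilde A$ is obtained by replacing $S$ by $M^{-1}$.) *)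

(* Defs.v *)
From HB Require Import structures.
From mathcomp Require Import all_boot all_order all_algebra.
From mathcomp Require Import all_classical all_reals all_analysis.
From mathcomp Require Export mxtens.
Set Implicit Arguments. Unset Strict Implicit. Unset Printing Implicit Defensive.
Import Order.TTheory GRing.Theory Num.Theory.
Local Open Scope ring_scope.

Section Defs.
Variable R : realType.

(* Legendre polynomials via Bonnet's recursion:
   L_0 = 1, L_1 = X, (n+2) L_{n+2} = (2n+3) X L_{n+1} - (n+1) L_n. *)
Fixpoint legendre_pair (n : nat) : {poly R} * {poly R} :=
  match n with
  | 0%N => (1, 'X)
  | k.+1 => let: (a, b) := legendre_pair k in
            (b, (k.+2%:R)^-1 *: ((2 * k%:R + 3) *: ('X * b) - (k.+1%:R) *: a))
  end.
Definition legendre (n : nat) : {poly R} := (legendre_pair n).1.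

Definition L2ip (p q : {poly R}) : R :=
  Rintegral (@lebesgue_measure R) `[(-1)%R, 1%R]%classic
            (fun x => p.[x] * q.[x]).

Definition jacobim1 (n : nat) : {poly R} :=
  ((n%:R - 1) / (2 * (2 * n%:R - 1))) *: (legendre n - legendre (n - 2)).

(* psi_{m+1} = sqrt(2(2m+1))/m * P_{m+1}^{(-1,-1)}, m >= 1 *)
Definition psi (m : nat) : {poly R} :=
  (Num.sqrt (2 * (2 * m%:R + 1)) / m%:R) *: jacobim1 m.+1.

Definition phi (m : nat) : {poly R} :=
  Num.sqrt ((2 * m%:R + 1) / 2) *: legendre m.

(* Indices m, n range over 1..N-1; i : 'I_(N-1) stands for m = i+1. *)
Definition massM (N : nat) : 'M[R]_(N - 1) :=
  \matrix_(i, j) L2ip (psi j.+1) (psi i.+1).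

Definition stiffS (N : nat) : 'M[R]_(N - 1) :=
  \matrix_(i, j) L2ip (phi j.+1)^`() (phi i.+1)^`().

Definition I_ (N : nat) : 'M[R]_(N - 1) := 1%:M.

Definition Atilde (N : nat) (kappa : R) : 'M[R]_((N - 1) * (N - 1)) :=
  massM N *t invmx (massM N) + invmx (massM N) *t massM N
  + 2%:R *: (I_ N *t I_ N) + kappa *: (I_ N *t massM N + massM N *t I_ N).

Definition Amat (N : nat) (kappa : R) : 'M[R]_((N - 1) * (N - 1)) :=
  massM N *t stiffS N + stiffS N *t massM N
  + 2%:R *: (I_ N *t I_ N) + kappa *: (I_ N *t massM N + massM N *t I_ N).

(* dimension of {v (column vector) : B v = v} *)
Definition eig1_dim (n : nat) (B : 'M[R]_n) : nat :=
  \rank (kermx (B - 1%:M)^T).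

End Defs.

(* Main.v *)
Require Import Defs.
From mathcomp Require Import all_boot all_order all_algebra.
From mathcomp Require Import all_classical all_reals all_analysis.
From HB Require Import structures.
From mathcomp Require Import mxtens zify ring lra.
Set Implicit Arguments. Unset Strict Implicit. Unset Printing Implicit Defensive.
Import Order.TTheory GRing.Theory Num.Theory.
Import numFieldNormedType.Exports.
Local Open Scope ring_scope.

Section LinAlg.
Variable R : realFieldType.

Lemma sumsq_eq0 p (v : 'rV[R]_p) : (v *m v^T) 0 0 = 0 -> v = 0.
Proof.
rewrite !mxE => H; apply/rowP => i; rewrite mxE.
have H0 : forall j, 0 <= v 0 j * v^T j 0 by move=> j; rewrite mxE -expr2 sqr_ge0.
have := @psumr_eq0P _ _ xpredT _ (fun j _ => H0 j) H i isT.
by rewrite mxE => /eqP; rewrite mulf_eq0 orbb => /eqP.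
Qed.

Lemma sumsq_ge0 p (v : 'rV[R]_p) : 0 <= (v *m v^T) 0 0.
Proof. by rewrite mxE; apply: sumr_ge0 => j _; rewrite mxE -expr2 sqr_ge0. Qed.

Lemma gram_ker m p (u : 'rV[R]_m) (Z : 'M[R]_(m,p)) :
  u *m (Z *m Z^T) = 0 -> u *m Z = 0.
Proof.
move=> H; apply: sumsq_eq0.
by rewrite trmx_mul mulmxA -(mulmxA u) H mul0mx mxE.
Qed.

Lemma rank_gram m p (Z : 'M[R]_(m,p)) : \rank (Z *m Z^T) = \rank Z.
Proof.
apply/eqP; rewrite eqn_leq mxrankM_maxl /=.
have : (\rank (kermx (Z *m Z^T)) <= \rank (kermx Z))%N.
  apply: mxrankS; apply/row_subP => i; apply/sub_kermxP.
  by apply: gram_ker; rewrite -row_mul mulmx_ker row0.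
rewrite !mxrank_ker => H.
have h1 := rank_leq_row Z; have h2 := rank_leq_row (Z *m Z^T).
lia.
Qed.
End LinAlg.

Section Vec.
Variable R : comPzRingType.

Definition vecm m n (U : 'M[R]_(m,n)) : 'rV[R]_(m*n) :=
  \row_k U (mxtens_unindex k).1 (mxtens_unindex k).2.
Definition unvecm m n (u : 'rV[R]_(m*n)) : 'M[R]_(m,n) :=
  \matrix_(i,j) u 0 (mxtens_index (i,j)).

Lemma vecmK m n : cancel (@unvecm m n) (@vecm m n).
Proof.
move=> u; apply/rowP => k; rewrite !mxE.
by case: (mxtens_unindex k) (mxtens_unindexK k) => i j /= ->.
Qed.

Lemma unvecmK m n : cancel (@vecm m n) (@unvecm m n).
Proof. by move=> U; apply/matrixP => i j; rewrite !mxE mxtens_indexK. Qed.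

Lemma vecm_inj m n : injective (@vecm m n).
Proof. exact: can_inj (@unvecmK m n). Qed.

Lemma vecmE m n p q (U : 'M[R]_(m,n)) (A : 'M[R]_(m,p)) (B : 'M[R]_(n,q)) :
  vecm U *m (A *t B) = vecm (A^T *m U *m B).
Proof.
apply/rowP => k; case: (mxtens_indexP k) => a b.
rewrite !mxE mxtens_indexK /=.
rewrite (reindex (@mxtens_index m n)) /=; last first.
  by apply: onW_bij; exists (@mxtens_unindex m n); [exact: mxtens_indexK| exact: mxtens_unindexK].
have -> : forall G : 'I_m * 'I_n -> R, \sum_x G x = \sum_i \sum_j G (i,j).
  by move=> G; rewrite pair_bigA; apply: eq_bigr => -[].
rewrite exchange_big /=; apply: eq_bigr => j _.
rewrite !mxE big_distrl /=; apply: eq_bigr => i _.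
by rewrite !mxE !mxtens_indexK /= mulrA [U i j * _]mulrC.
Qed.

Lemma tensmxDl m n p q (A B : 'M[R]_(m,n)) (C : 'M[R]_(p,q)) :
  (A + B) *t C = A *t C + B *t C.
Proof. by apply/matrixP => i j; rewrite !mxE mulrDl. Qed.
Lemma tensmxDr m n p q (A : 'M[R]_(m,n)) (B C : 'M[R]_(p,q)) :
  A *t (B + C) = A *t B + A *t C.
Proof. by apply/matrixP => i j; rewrite !mxE mulrDr. Qed.
Lemma tensmxBl m n p q (A B : 'M[R]_(m,n)) (C : 'M[R]_(p,q)) :
  (A - B) *t C = A *t C - B *t C.
Proof. by apply/matrixP => i j; rewrite !mxE mulrBl. Qed.
Lemma tensmxBr m n p q (A : 'M[R]_(m,n)) (B C : 'M[R]_(p,q)) :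
  A *t (B - C) = A *t B - A *t C.
Proof. by apply/matrixP => i j; rewrite !mxE mulrBr. Qed.

Lemma tensmx11 m n : (1%:M : 'M[R]_m) *t (1%:M : 'M[R]_n) = 1%:M.
Proof.
apply/matrixP => i j; case: (mxtens_indexP i) => a b; case: (mxtens_indexP j) => c d.
rewrite tensmxE !mxE (inj_eq (can_inj (@mxtens_indexK m n))) xpair_eqE.
by case: (a == c); case: (b == d); rewrite /= ?mulr1 ?mulr0 ?mul0r.
Qed.
End Vec.

Section Kron.
Variable R : realFieldType.

Lemma vecm0 m n : vecm (0 : 'M[R]_(m,n)) = 0.
Proof. by apply/rowP => k; rewrite !mxE. Qed.

Lemma kron_ker n p q (H : 'M[R]_(n,p)) (Y : 'M[R]_(n,q)) :
  H *m H^T \in unitmx ->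
  \rank (kermx ((H *m H^T) *t (Y *m Y^T) + (Y *m Y^T) *t (H *m H^T)))
  = (\rank (kermx (Y *m Y^T)) * \rank (kermx (Y *m Y^T)))%N.
Proof.
set M := H *m H^T; set D := Y *m Y^T => uM.
set X := M *t D + D *t M.
have DT : D^T = D by rewrite /D trmx_mul trmxK.
set k := \rank (kermx D).
pose K : 'M[R]_(k, n) := row_base (kermx D).
have KD : K *m D = 0.
  by apply/sub_kermxP; rewrite /K (eq_row_base (kermx D)) submx_refl.
have [K' KK'] : exists K', K *m K' = 1%:M by apply/row_freeP; exact: row_base_free.
have sub1 : (K *t K <= kermx X)%MS.
  apply/sub_kermxP; rewrite mulmxDr !tensmx_mul KD tensmx0 tens0mx addr0.
  done.
have sub2 : (kermx X <= K *t K)%MS.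
  apply/row_subP => i; set u := row i (kermx X).
  have uX : u *m X = 0 by rewrite /u -row_mul mulmx_ker row0.
  have HY : (H *t Y) *m (H *t Y)^T = M *t D by rewrite trmx_tens tensmx_mul.
  have YH : (Y *t H) *m (Y *t H)^T = D *t M by rewrite trmx_tens tensmx_mul.
  have e : ((u *m (H *t Y)) *m (u *m (H *t Y))^T) 0 0
         + ((u *m (Y *t H)) *m (u *m (Y *t H))^T) 0 0 = 0.
    have : ((u *m X) *m u^T) 0 0 = 0 by rewrite uX mul0mx mxE.
    by rewrite /X mulmxDr mulmxDl mxE !trmx_mul !mulmxA -!(mulmxA u) HY YH.
  have g1 := sumsq_ge0 (u *m (H *t Y)); have g2 := sumsq_ge0 (u *m (Y *t H)).
  have /sumsq_eq0 z1 : ((u *m (H *t Y)) *m (u *m (H *t Y))^T) 0 0 = 0 by lra.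
  have /sumsq_eq0 z2 : ((u *m (Y *t H)) *m (u *m (Y *t H))^T) 0 0 = 0 by lra.
  have uMD : u *m (M *t D) = 0 by rewrite -HY mulmxA z1 mul0mx.
  have uDM : u *m (D *t M) = 0 by rewrite -YH mulmxA z2 mul0mx.
  have u1D : u *m (1%:M *t D) = 0.
    have : u *m (1%:M *t D) *m (M *t 1%:M) = 0.
      by rewrite -mulmxA tensmx_mul mul1mx mulmx1.
    have e1 : (M *t (1%:M : 'M[R]_n)) *m (invmx M *t (1%:M : 'M[R]_n)) = 1%:M.
      by rewrite tensmx_mul mulmxV // mulmx1 tensmx11.
    move/(congr1 (mulmx^~ (invmx M *t 1%:M))).
    by rewrite mul0mx -(mulmxA _ (M *t _)) e1 mulmx1.
  have uD1 : u *m (D *t 1%:M) = 0.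
    have : u *m (D *t 1%:M) *m (1%:M *t M) = 0.
      by rewrite -mulmxA tensmx_mul mul1mx mulmx1.
    have e1 : ((1%:M : 'M[R]_n) *t M) *m ((1%:M : 'M[R]_n) *t invmx M) = 1%:M.
      by rewrite tensmx_mul mulmxV // mulmx1 tensmx11.
    move/(congr1 (mulmx^~ (1%:M *t invmx M))).
    by rewrite mul0mx -(mulmxA _ (1%:M *t M)) e1 mulmx1.
  set U := unvecm u.
  have uU : u = vecm U by rewrite /U vecmK.
  have UD : U *m D = 0.
    apply: (@vecm_inj _ n n); rewrite vecm0 -u1D uU vecmE trmx1 mul1mx.
    done.
  have DU : U^T *m D = 0.
    have : D^T *m U = 0.
      apply: (@vecm_inj _ n n); rewrite vecm0 -uD1 uU vecmE mulmx1.
      done.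
    by move=> h; have := congr1 (@trmx _ n n) h; rewrite trmx_mul trmxK trmx0.
  have UK : (U <= K)%MS by rewrite /K (eq_row_base (kermx D)); apply/sub_kermxP.
  set A := U *m pinvmx K.
  have UA : A *m K = U by rewrite /A mulmxKpV.
  have ATD : A^T *m D = 0.
    have : K'^T *m (K^T *m (A^T *m D)) = 0.
      by move: DU; rewrite -UA trmx_mul => DU; rewrite (mulmxA K^T) DU mulmx0.
    by rewrite mulmxA -trmx_mul KK' trmx1 mul1mx.
  have ATK : (A^T <= K)%MS by rewrite /K (eq_row_base (kermx D)); apply/sub_kermxP.
  set C := A^T *m pinvmx K.
  have CA : C *m K = A^T by rewrite /C mulmxKpV.
  apply/submxP; exists (vecm C^T).
  rewrite vecmE uU -UA -[A]trmxK -CA trmx_mul.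
  by rewrite mulmxA.
apply/eqP; rewrite eqn_leq; apply/andP; split.
  apply: leq_trans (mxrankS sub2) _; exact: rank_leq_row.
apply: leq_trans (mxrankS sub1).
apply: (@mulmx1_min_rank _ _ _ _ _ 1%:M (K' *t K')).
by rewrite mul1mx tensmx_mul KK' tensmx11.
Qed.
End Kron.

Section Struct.
Variable R : realFieldType.

Lemma trmxN' m n (A : 'M[R]_(m,n)) : (- A)^T = - A^T.
Proof. by apply/matrixP => i j; rewrite !mxE. Qed.
Lemma trmxD' m n (A B : 'M[R]_(m,n)) : (A + B)^T = A^T + B^T.
Proof. by apply/matrixP => i j; rewrite !mxE. Qed.

Lemma struct_lemma n p (Ps P2 : 'M[R]_(n,p)) (E : 'M[R]_(2,p)) :
  (p <= n.+2)%N -> Ps *m P2^T = - 1%:M -> Ps *m E^T = 0 ->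
  (2 <= \rank (P2 *m E^T))%N ->
  [/\ Ps *m Ps^T \in unitmx,
      P2 *m P2^T - invmx (Ps *m Ps^T)
        = (P2 + invmx (Ps *m Ps^T) *m Ps) *m (P2 + invmx (Ps *m Ps^T) *m Ps)^T
    & \rank (kermx ((P2 + invmx (Ps *m Ps^T) *m Ps)
                      *m (P2 + invmx (Ps *m Ps^T) *m Ps)^T)) = (n - 2)%N].
Proof.
move=> hp PsP2 PsE hr.
set M := Ps *m Ps^T; set Mi := invmx M; set Y := P2 + Mi *m Ps.
have rP : \rank Ps = n.
  apply/eqP; rewrite eqn_leq rank_leq_row /=.
  by rewrite -{1}(mxrank1 R n) -mxrank_opp -PsP2 mxrankM_maxl.
have uM : M \in unitmx by rewrite -row_free_unit /row_free rank_gram rP.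
have MT : M^T = M by rewrite /M trmx_mul trmxK.
have MiT : Mi^T = Mi by rewrite /Mi trmx_inv MT.
have P2Ps : P2 *m Ps^T = - 1%:M.
  by rewrite -[P2]trmxK -trmx_mul PsP2 trmxN' trmx1.
have YY : P2 *m P2^T - Mi = Y *m Y^T.
  rewrite /Y trmxD' trmx_mul MiT mulmxDr !mulmxDl.
  rewrite -(mulmxA Mi Ps) PsP2 mulmxN mulmx1.
  rewrite (mulmxA P2) P2Ps mulNmx mul1mx.
  rewrite (mulmxA (Mi *m Ps)) -(mulmxA Mi Ps) -/M mulVmx // mul1mx.
  by rewrite addNr addr0.
have YPs : Y *m Ps^T = 0.
  by rewrite /Y mulmxDl P2Ps -mulmxA -/M mulVmx // addNr.
have rY : \rank Y = 2.
  apply/eqP; rewrite eqn_leq; apply/andP; split.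
    have : (Y <= kermx Ps^T)%MS by apply/sub_kermxP.
    move/mxrankS; rewrite mxrank_ker mxrank_tr rP => h.
    by apply: (leq_trans h); rewrite leq_subLR addn2.
  apply: (leq_trans hr).
  have -> : P2 *m E^T = Y *m E^T by rewrite /Y mulmxDl -mulmxA PsE mulmx0 addr0.
  exact: mxrankM_maxl.
split => //.
by rewrite mxrank_ker rank_gram rY.
Qed.
End Struct.

Section Leg.
Variable R : realType.
Local Notation L n := (legendre R n).

Lemma leg0 : L 0 = 1. Proof. by []. Qed.
Lemma legS n : L n.+1 = (legendre_pair R n).2.
Proof. by rewrite /legendre /=; case: (legendre_pair R n). Qed.
Lemma lp_eq n : legendre_pair R n = (L n, L n.+1).
Proof. rewrite legS /legendre. by case: (legendre_pair R n). Qed.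
Lemma leg1 : L 1 = 'X. Proof. by rewrite legS. Qed.

Lemma bonnet n : n.+2%:R * L n.+2 = (2 * n%:R + 3) * ('X * L n.+1) - n.+1%:R * L n.
Proof.
rewrite [L n.+2]legS /= lp_eq /=.
rewrite -!mul_polyC (mulrA (n.+2%:R)) -(polyC_natr _ n.+2) -polyCM mulfV ?pnatr_eq0 // polyC1 mul1r.
rewrite !polyC_natr; ring.
Qed.

Lemma natP_neq0 k : ((k.+1%:R : {poly R}) != 0).
Proof. by rewrite -polyC_natr polyC_eq0 pnatr_eq0. Qed.

Lemma bonnet' n : n.+2%:R * L n.+2 = (2 * n + 3)%:R * ('X * L n.+1) - n.+1%:R * L n.
Proof. rewrite bonnet; ring. Qed.

Lemma XL k : (2 * k + 1)%:R * ('X * L k) = k.+1%:R * L k.+1 + k%:R * L k.-1.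
Proof.
case: k => [|m]; first by rewrite leg0 leg1 /=; ring.
have := bonnet' m; rewrite /= => h.
have -> : (m.+2%:R * L m.+2 = (2 * m + 3)%:R * ('X * L m.+1) - m.+1%:R * L m) by [].
ring.
Qed.

Lemma deriv1' : (1 : {poly R})^`() = 0.
Proof. by rewrite -polyC1 derivC. Qed.

Lemma deriv_natM k (p : {poly R}) : ((k%:R : {poly R}) * p)^`() = k%:R * p^`().
Proof. by rewrite !mulr_natl derivMn. Qed.

Lemma derivbonnet n : n.+2%:R * (L n.+2)^`() =
  (2 * n + 3)%:R * (L n.+1 + 'X * (L n.+1)^`()) - n.+1%:R * (L n)^`().
Proof.
have := congr1 deriv (bonnet' n).
rewrite derivB !deriv_natM derivM derivX mul1r => ->; done.
Qed.

Lemma leg_derivs n :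
  'X * (L n.+1)^`() = (L n)^`() + n.+1%:R * L n.+1 /\ 'X * (L n.+2)^`() = (L n.+1)^`() + n.+2%:R * L n.+2.
Proof.
elim: n => [|n [IH1 IH2]].
  have e2 := bonnet' 0.
  have a0 : (L 2)^`() = 3%:R * 'X.
    apply: (mulfI (natP_neq0 1)); rewrite derivbonnet leg1 leg0 derivX deriv1'; ring.
  split; first by rewrite leg1 leg0 derivX deriv1'; ring.
  rewrite a0 leg1 derivX.
  apply: (mulfI (natP_neq0 1)). rewrite e2 leg1 leg0 /=; ring.
split => //.
have a_n : (L n.+2)^`() = (L n)^`() + (2 * n + 3)%:R * L n.+1.
  apply: (mulfI (natP_neq0 n.+1)); rewrite derivbonnet IH1; ring.
have a_n1 : (L n.+3)^`() = (L n.+1)^`() + (2 * n + 5)%:R * L n.+2.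
  apply: (mulfI (natP_neq0 n.+2)); rewrite derivbonnet IH2; ring.
rewrite a_n1 mulrDr IH1 a_n.
have e := bonnet' n.+1.
rewrite e; ring.
Qed.

End Leg.

Section Leg2.
Variable R : realType.
Local Notation L n := (legendre R n).

Lemma legA n : (L n.+2)^`() = (L n)^`() + (2 * n + 3)%:R * L n.+1.
Proof.
apply: (mulfI (natP_neq0 R n.+1)); rewrite derivbonnet (proj1 (leg_derivs R n)); ring.
Qed.

Lemma natR_neq0 k : (k.+1%:R : R) != 0.
Proof. by rewrite pnatr_eq0. Qed.

Lemma hornerNat k (x : R) : ((k%:R : {poly R})).[x] = k%:R.
Proof. by rewrite -polyC_natr hornerC. Qed.

Lemma legval n : (L n).[1] = 1 /\ (L n).[-1] = (-1) ^+ n.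
Proof.
suff: ((L n).[1] = 1 /\ (L n).[-1] = (-1) ^+ n) /\
      ((L n.+1).[1] = 1 /\ (L n.+1).[-1] = (-1) ^+ n.+1) by case.
elim: n => [|n [IH1 [IH2a IH2b]]].
  by rewrite leg0 leg1 !hornerE expr1 expr0.
split => //.
have e := bonnet' R n.
have h := congr1 (fun p => p.[1]) e; have h' := congr1 (fun p => p.[-1]) e.
move: h h'; rewrite !(hornerNat, hornerM, hornerD, hornerN, hornerX, hornerNat) IH2a IH2b (proj1 IH1) (proj2 IH1).
move=> h h'; split.
  apply: (mulfI (natR_neq0 n.+1)); rewrite h; ring.
apply: (mulfI (natR_neq0 n.+1)); rewrite h' !exprS; ring.
Qed.

Definition Iq (r : {poly R}) : R :=
  Rintegral (@lebesgue_measure R) `[(-1)%R, 1%R]%classic (fun x => r.[x]).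

Lemma Iq_deriv (P : {poly R}) : Iq P^`() = P.[1] - P.[-1].
Proof.
rewrite /Iq /Rintegral.
rewrite (@continuous_FTC2 _ _ (horner P)).
- by rewrite -EFinB.
- by rewrite gtrN// ltr01.
- by apply: continuous_subspaceT; exact: continuous_horner.
- split=> [x _| |].
  + exact: derivable_horner.
  + by apply: cvg_at_right_filter; exact: continuous_horner.
  + by apply: cvg_at_left_filter; exact: continuous_horner.
- by move=> x _; rewrite -derivE.
Qed.

Definition prim (r : {poly R}) : {poly R} :=
  \poly_(i < (size r).+1) (if i is j.+1 then r`_j / j.+1%:R else 0).

Lemma primK r : (prim r)^`() = r.
Proof.
apply/polyP => i; rewrite coef_deriv coef_poly ltnS.
case: ltnP => hi.
  by rewrite -(mulr_natr (r`_i / i.+1%:R)) divfK // natR_neq0.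
by rewrite -(mulr_natr 0) mul0r nth_default.
Qed.

Lemma Iq_lin a p q : Iq (a *: p + q) = a * Iq p + Iq q.
Proof.
rewrite -[p]primK -[q]primK -derivZ -derivD !Iq_deriv !(hornerD, hornerZ).
ring.
Qed.

Lemma IqD p q : Iq (p + q) = Iq p + Iq q.
Proof. by rewrite -[p]scale1r Iq_lin mul1r scale1r. Qed.
Lemma Iq0 : Iq 0 = 0.
Proof. by rewrite -(deriv0 R) Iq_deriv !horner0 subrr. Qed.
Lemma IqZ a p : Iq (a *: p) = a * Iq p.
Proof. by rewrite -[a *: p]addr0 Iq_lin Iq0 addr0. Qed.
Lemma IqN p : Iq (- p) = - Iq p.
Proof. by rewrite -scaleN1r IqZ mulN1r. Qed.
Lemma IqB p q : Iq (p - q) = Iq p - Iq q.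
Proof. by rewrite IqD IqN. Qed.
Lemma IqC c p : Iq (c%:P * p) = c * Iq p.
Proof. by rewrite mul_polyC IqZ. Qed.
Lemma Iq_natM k p : Iq (k%:R * p) = k%:R * Iq p.
Proof. by rewrite -polyC_natr IqC. Qed.
Lemma Iq_sum (I : finType) (F : I -> {poly R}) : Iq (\sum_i F i) = \sum_i Iq (F i).
Proof.
apply: (big_ind2 (fun a b => Iq a = b)); first exact: Iq0.
  by move=> x1 y1 x2 y2 <- <-; rewrite IqD.
by [].
Qed.

Lemma L2ipE p q : L2ip p q = Iq (p * q).
Proof. by rewrite /L2ip /Iq; congr Rintegral; apply: funext => x; rewrite hornerM. Qed.

End Leg2.

Section Leg3.
Variable R : realType.
Local Notation L n := (legendre R n).
Local Notation Iq := (@Iq R).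

Lemma Iq_L n : Iq (L n.+1) = 0.
Proof.
have h : Iq ((2 * n + 3)%:R * L n.+1) = 0.
  have -> : ((2 * n + 3)%:R * L n.+1 = (L n.+2 - L n)^`()).
    by rewrite derivB legA; ring.
  rewrite Iq_deriv !hornerD !hornerN !(proj1 (legval _ _)) !(proj2 (legval _ _)).
  rewrite !exprS; ring.
move: h; rewrite Iq_natM => /eqP; rewrite mulf_eq0 => /orP[|/eqP //].
by rewrite pnatr_eq0 addn3.
Qed.

Lemma lincomb2 (a b c d e f : {poly R}) (k1 k2 : {poly R}) :
  a = b -> c = d -> e - f = k1 * (b - a) - k2 * (d - c) -> e = f.
Proof. move=> -> -> /eqP; rewrite !subrr !mulr0 subr0 subr_eq0 => /eqP //. Qed.

Lemma Lortho m n : (m < n)%N -> Iq (L m * L n) = 0.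
Proof.
elim/ltn_ind: m n => m IH n mn.
case: m IH mn => [|m] IH mn.
  by case: n mn => // n _; rewrite leg0 mul1r Iq_L.
case: n mn => // n mn.
have E : ((2 * n + 3) * m.+1)%:R * (L m.+1 * L n.+1) =
   ((2 * m + 1) * n.+2)%:R * (L m * L n.+2) + ((2 * m + 1) * n.+1)%:R * (L m * L n)
   - ((2 * n + 3) * m)%:R * (L m.-1 * L n.+1).
  apply: (lincomb2 (XL R m) (XL R n.+1) (k1 := (2 * n + 3)%:R * L n.+1) (k2 := (2 * m + 1)%:R * L m)).
  rewrite /=; ring.
have := congr1 Iq E.
rewrite IqB !IqD !Iq_natM (IH m _ n.+2) ?(IH m _ n) //; try lia.
have -> : ((2 * n + 3) * m)%:R * Iq (L m.-1 * L n.+1) = 0.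
  case: m IH mn {E} => [|m] IH mn; first by rewrite muln0 mul0r.
  by rewrite (IH m) ?mulr0 //=; lia.
rewrite !mulr0 !addr0 subr0 => /eqP; rewrite mulf_eq0 => /orP[|/eqP //].
by rewrite pnatr_eq0 muln_eq0 addn3.
Qed.
End Leg3.

Section Leg4.
Variable R : realType.
Local Notation L n := (legendre R n).
Local Notation Iq := (@Iq R).

Lemma Lnorm n : Iq (L n * L n) = 2 / (2 * n + 1)%:R.
Proof.
elim: n => [|n IH].
  by rewrite leg0 mulr1 -(derivX R) Iq_deriv !hornerX muln0 add0n divr1 opprK.
have E : ((2 * n + 3) * n.+1)%:R * (L n.+1 * L n.+1) =
   ((2 * n + 1) * n.+2)%:R * (L n * L n.+2) + ((2 * n + 1) * n.+1)%:R * (L n * L n)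
   - ((2 * n + 3) * n)%:R * (L n.-1 * L n.+1).
  apply: (lincomb2 (XL R n) (XL R n.+1) (k1 := (2 * n + 3)%:R * L n.+1) (k2 := (2 * n + 1)%:R * L n)).
  rewrite /=; ring.
have := congr1 Iq E.
rewrite IqB !IqD !Iq_natM (@Lortho R n n.+2) // IH.
have -> : ((2 * n + 3) * n)%:R * Iq (L n.-1 * L n.+1) = 0.
  case: n IH E => [|n] IH E; first by rewrite muln0 mul0r.
  by rewrite (@Lortho R n n.+2) ?mulr0.
rewrite mulr0 add0r subr0 => h.
have h3 : ((2 * n + 3)%:R : R) != 0 by rewrite pnatr_eq0 addn3.
have h1 : ((2 * n + 1)%:R : R) != 0 by rewrite pnatr_eq0 addn1.
have h2 : ((2 * n.+1 + 1)%:R : R) != 0 by rewrite pnatr_eq0 addn1.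
have hn : (n.+1%:R : R) != 0 by rewrite pnatr_eq0.
apply: (mulfI (mulf_neq0 h3 hn)).
rewrite -natrM h natrM.
have -> : ((2 * n.+1 + 1)%:R : R) = (2 * n + 3)%:R by congr (_%:R); lia.
rewrite natrM; field; by apply/andP; split; apply: lt0r_neq0; have := ler0n R n; lra.
Qed.
End Leg4.

Section Leg5.
Variable R : realType.
Local Notation L n := (legendre R n).
Local Notation Iq := (@Iq R).

Lemma size_leg n : size (L n) = n.+1.
Proof.
suff : size (L n) = n.+1 /\ size (L n.+1) = n.+2 by case.
elim: n => [|n [IH1 IH2]]; first by rewrite leg0 leg1 size_poly1 size_polyX.
split => //.
have e := bonnet' R n.
have hL : L n.+1 != 0 by rewrite -size_poly_eq0 IH2.
have sA : size ((2 * n + 3)%:R * ('X * L n.+1)) = n.+3.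
  by rewrite -polyC_natr size_Cmul ?pnatr_eq0 ?addn3 // mulrC size_mulX // IH2.
have sB : size (n.+1%:R * L n) = n.+1.
  by rewrite -polyC_natr size_Cmul ?pnatr_eq0 // IH1.
have : size (n.+2%:R * L n.+2) = n.+3.
  by rewrite e size_polyDl ?sA // size_polyN sB ltnS ltnW.
by rewrite -polyC_natr size_Cmul ?pnatr_eq0.
Qed.

Lemma leg_span K (p : {poly R}) : (size p <= K.+1)%N ->
  exists a : nat -> R, p = \sum_(k < K.+1) a k *: L k.
Proof.
elim: K p => [|K IH] p hp.
  exists (fun _ => p`_0); rewrite big_ord1 leg0 -mul_polyC mulr1.
  exact: size1_polyC.
pose c := p`_K.+1 / lead_coef (L K.+1).
have hl : lead_coef (L K.+1) != 0 by rewrite lead_coef_eq0 -size_poly_eq0 size_leg.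
have [a ha] : exists a : nat -> R, p - c *: L K.+1 = \sum_(k < K.+1) a k *: L k.
  apply: IH; apply/leq_sizeP => j hj.
  rewrite coefB coefZ.
  case: (ltngtP j K.+1) hj => // [hj _|-> _].
    have hL : (size (L K.+1) <= K.+2)%N by rewrite size_leg.
    move/leq_sizeP: hp => hp; move/leq_sizeP: hL => hL.
    by rewrite hp // hL // mulr0 subr0.
  move: hl; rewrite /c lead_coefE size_leg /= => hl; by rewrite divfK ?subrr.
exists (fun k => if k == K.+1 then c else a k).
rewrite big_ord_recr /= eqxx -(subrK (c *: L K.+1) p) ha; congr (_ + _).
apply: eq_bigr => k _; rewrite ifN //; apply/negP => /eqP hk.
by have := ltn_ord k; rewrite hk ltnn.
Qed.

Lemma Lortho' k l : k != l -> Iq (L k * L l) = 0.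
Proof.
case: (ltngtP k l) => // h _; first exact: Lortho.
by rewrite mulrC Lortho.
Qed.

Lemma leg_coef K (a : nat -> R) (l : 'I_K.+1) :
  Iq ((\sum_(k < K.+1) a k *: L k) * L l) = a l * (2 / (2 * l + 1)%:R).
Proof.
rewrite mulr_suml Iq_sum (bigD1 l) //= big1 ?addr0.
  by rewrite -scalerAl IqZ Lnorm.
move=> k hk; rewrite -scalerAl IqZ Lortho' ?mulr0 //.
Qed.

Lemma leg_expand K (p : {poly R}) : (size p <= K.+1)%N ->
  p = \sum_(k < K.+1) (Iq (p * L k) * ((2 * k + 1)%:R / 2)) *: L k.
Proof.
move=> /leg_span[a ha]; rewrite {1}ha; rewrite ha.
apply: eq_bigr => k _; rewrite leg_coef; congr (_ *: _).
have h1 : ((2 * k + 1)%:R : R) != 0 by rewrite pnatr_eq0 addn1.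
by field.
Qed.

Definition sk (m : nat) : R := Num.sqrt ((2 * m%:R + 1) / 2).

Lemma sk2 m : sk m * sk m = (2 * m + 1)%:R / 2.
Proof.
rewrite /sk -expr2 sqr_sqrtr; first by rewrite natrD natrM.
apply: divr_ge0 => //; have := ler0n R m; lra.
Qed.

Lemma phiE m : phi R m = sk m *: L m.
Proof. by []. Qed.

Lemma phi_ortho k l : Iq (phi R k * phi R l) = (k == l)%:R.
Proof.
rewrite !phiE -scalerAl -scalerAr !IqZ.
case: eqP => [->|/eqP h]; last by rewrite Lortho' ?mulr0.
rewrite Lnorm mulrA sk2.
have h1 : ((2 * l + 1)%:R : R) != 0 by rewrite pnatr_eq0 addn1.
have -> : (true%:R : R) = 1 by []. field. by move: h1; rewrite natrD natrM.
Qed.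

Lemma phi_expand K (p : {poly R}) : (size p <= K.+1)%N ->
  p = \sum_(k < K.+1) Iq (p * phi R k) *: phi R k.
Proof.
move=> hp; rewrite {1}(leg_expand hp); apply: eq_bigr => k _.
rewrite phiE -(scalerAr (sk k) p) IqZ scalerA; congr (_ *: _).
have -> : sk k * Iq (p * L k) * sk k = Iq (p * L k) * (sk k * sk k) by ring.
by rewrite sk2.
Qed.
End Leg5.

Section Conn.
Variable R : realType.
Local Notation L n := (legendre R n).
Local Notation Iq := (@Iq R).

Lemma sqrt_half (x : R) : 0 <= x -> Num.sqrt (2 * x) / 2 = Num.sqrt (x / 2).
Proof.
move=> x0.
have h : x / 2 = (Num.sqrt (2 * x) / 2) ^+ 2.
  rewrite expr_div_n sqr_sqrtr; first by field.
  by apply: mulr_ge0.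
rewrite h sqrtr_sqr ger0_norm //.
Qed.

Lemma psi_expr m : psi R m.+1 =
  (Num.sqrt (2 * (2 * m.+1%:R + 1)) / (2 * (2 * m.+1%:R + 1))) *: (L m.+2 - L m).
Proof.
rewrite /psi /jacobim1 scalerA.
have -> : (m.+2 - 2 = m)%N by lia.
congr (_ *: _).
have h1 : (m.+1%:R : R) != 0 by rewrite pnatr_eq0.
have h2 : (2 * m.+1%:R + 1 : R) != 0.
  by apply: lt0r_neq0; have := ler0n R m.+1; lra.
rewrite -[m.+2%:R]natr1 -[m.+1%:R]natr1.
rewrite -[m.+1%:R]natr1 in h1 h2.
field; apply/andP; split => //; apply: lt0r_neq0; have := ler0n R m; lra.
Qed.

Lemma psi_deriv m : (psi R m.+1)^`() = phi R m.+1.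
Proof.
rewrite psi_expr derivZ derivB legA addrAC subrr add0r phiE.
rewrite -polyC_natr mul_polyC scalerA; congr (_ *: _).
rewrite /sk -sqrt_half; last by have := ler0n R m.+1; lra.
have h2 : (2 * m.+1%:R + 1 : R) != 0.
  by apply: lt0r_neq0; have := ler0n R m.+1; lra.
have -> : ((2 * m + 3)%:R : R) = 2 * m.+1%:R + 1.
  by rewrite -natr1 natrD natrM; ring.
by field.
Qed.

Lemma psi_val m : (psi R m.+1).[1] = 0 /\ (psi R m.+1).[-1] = 0.
Proof.
rewrite psi_expr !hornerZ !hornerD !hornerN.
rewrite !(proj1 (legval _ _)) !(proj2 (legval _ _)) !exprS.
split; ring.
Qed.

Lemma Iq_ibp (f g : {poly R}) : f.[1] = 0 -> f.[-1] = 0 ->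
  Iq (f * g^`()) = - Iq (f^`() * g).
Proof.
move=> h1 h2; have := Iq_deriv (f * g).
rewrite derivM IqD !hornerM h1 h2 !mul0r subrr => /eqP.
by rewrite addrC addr_eq0 => /eqP.
Qed.

Lemma size_deriv_le (p : {poly R}) : (size p^`() <= size p)%N.
Proof.
have [->|h] := eqVneq p 0; first by rewrite deriv0.
exact: ltnW (lt_size_deriv h).
Qed.

Lemma size_psi m : (size (psi R m.+1) <= m.+3)%N.
Proof.
rewrite psi_expr; apply: leq_trans (size_scale_leq _ _) _.
apply: leq_trans (size_polyD _ _) _.
by rewrite size_polyN !size_leg geq_max leqnn /=; lia.
Qed.

Lemma size_phid m : (size (phi R m)^`() <= m.+1)%N.
Proof.
apply: leq_trans (size_deriv_le _) _; rewrite phiE.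
by apply: leq_trans (size_scale_leq _ _) _; rewrite size_leg.
Qed.

Lemma ip_expand K (f g : {poly R}) : (size f <= K.+1)%N ->
  Iq (f * g) = \sum_(k < K.+1) Iq (f * phi R k) * Iq (g * phi R k).
Proof.
move=> hf; rewrite {1}(phi_expand hf) mulr_suml Iq_sum.
apply: eq_bigr => k _. by rewrite -scalerAl IqZ [phi R k * g]mulrC.
Qed.

End Conn.

Section Mats.
Variable R : realType.
Variable N : nat.
Local Notation n := (N - 1)%N.
Local Notation L k := (legendre R k).
Local Notation Iq := (@Iq R).

Definition Psi : 'M[R]_(n, n.+2) := \matrix_(i, k) Iq (psi R i.+1 * phi R k).
Definition Psi2 : 'M[R]_(n, n.+2) := \matrix_(i, k) Iq ((phi R i.+1)^`() * phi R k).
Definition Ev : 'M[R]_(2, n.+2) :=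
  \matrix_(r, k) (phi R k).[if (r : nat) == 0%N then (1 : R) else -1].

Lemma size_psiI (i : 'I_n) : (size (psi R i.+1) <= n.+2)%N.
Proof. apply: leq_trans (size_psi R i) _; have := ltn_ord i; lia. Qed.
Lemma size_phidI (i : 'I_n) : (size (phi R i.+1)^`() <= n.+2)%N.
Proof. apply: leq_trans (size_phid R i.+1) _; have := ltn_ord i; lia. Qed.

Lemma massME : massM R N = Psi *m Psi^T.
Proof.
apply/matrixP => i j; rewrite !mxE L2ipE (ip_expand _ (size_psiI j)).
by apply: eq_bigr => k _; rewrite !mxE mulrC.
Qed.

Lemma stiffSE : stiffS R N = Psi2 *m Psi2^T.
Proof.
apply/matrixP => i j; rewrite !mxE L2ipE (ip_expand _ (size_phidI j)).
by apply: eq_bigr => k _; rewrite !mxE mulrC.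
Qed.

Lemma PsiPsi2 : Psi *m Psi2^T = - 1%:M.
Proof.
apply/matrixP => i j; rewrite !mxE.
transitivity (Iq (psi R i.+1 * (phi R j.+1)^`())).
  by rewrite (ip_expand _ (size_psiI i)); apply: eq_bigr => k _; rewrite !mxE.
have [h1 h2] := psi_val R i.
rewrite Iq_ibp // psi_deriv phi_ortho eqSS.
by [].
Qed.

Lemma expand_eval (f : {poly R}) (x : R) : (size f <= n.+2)%N ->
  \sum_(k < n.+2) Iq (f * phi R k) * (phi R k).[x] = f.[x].
Proof.
move=> hf; rewrite [in RHS](phi_expand hf) horner_sum.
apply: eq_bigr => k _. by rewrite (hornerZ (Iq (f * phi R k))).
Qed.

Lemma PsiEv : Psi *m Ev^T = 0.
Proof.
apply/matrixP => i r; rewrite !mxE.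
have [h1 h2] := psi_val R i.
transitivity ((psi R i.+1).[if (r : nat) == 0%N then (1 : R) else -1]).
  by rewrite -(expand_eval _ (size_psiI i)); apply: eq_bigr => k _; rewrite !mxE.
by case: ((r : nat) == 0%N).
Qed.

Lemma Psi2EvE (j : 'I_n) (r : 'I_2) :
  (Psi2 *m Ev^T) j r = ((phi R j.+1)^`()).[if (r : nat) == 0%N then (1 : R) else -1].
Proof.
rewrite !mxE -(expand_eval _ (size_phidI j)).
by apply: eq_bigr => k _; rewrite !mxE.
Qed.

End Mats.

Section Rank2.
Variable R : realType.
Variable N : nat.
Hypothesis hN : (3 <= N)%N.
Local Notation n := (N - 1)%N.
Local Notation L k := (legendre R k).

Lemma sk_gt0 m : 0 < sk R m.
Proof. rewrite /sk sqrtr_gt0; apply: divr_gt0 => //; have := ler0n R m; lra. Qed.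

Lemma phi1d (x : R) : ((phi R 1)^`()).[x] = sk R 1.
Proof. by rewrite phiE derivZ leg1 derivX hornerZ hornerC mulr1. Qed.

Lemma phi2d (x : R) : ((phi R 2)^`()).[x] = sk R 2 * (3 * x).
Proof.
rewrite phiE derivZ (legA R 0) leg0 leg1 -polyC1 derivC add0r hornerZ.
by rewrite hornerM hornerX hornerNat.
Qed.


Lemma rank_Psi2Ev : (2 <= \rank (Psi2 R N *m (Ev R N)^T))%N.
Proof.
have h0 : (0 < n)%N by lia.
have h1 : (1 < n)%N by lia.
pose e (a : 'I_2) : 'I_n := if (a : nat) == 0%N then Ordinal h0 else Ordinal h1.
pose Sel : 'M[R]_(2, n) := \matrix_(a, j) (j == e a)%:R.
set s1 := sk R 1; set s2 := sk R 2.
have s1p : 0 < s1 by exact: sk_gt0.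
have s2p : 0 < s2 by exact: sk_gt0.
pose Nm : 'M[R]_2 := \matrix_(r, b)
  (if (b : nat) == 0%N then 1 / (2 * s1)
   else if (r : nat) == 0%N then 1 / (6 * s2) else -1 / (6 * s2)).
apply: (@mulmx1_min_rank _ _ _ _ _ Sel Nm).
have SW : forall a r, (Sel *m (Psi2 R N *m (Ev R N)^T)) a r
    = (Psi2 R N *m (Ev R N)^T) (e a) r.
  move=> a r; rewrite [LHS]mxE (bigD1 (e a)) //=.
  rewrite [Sel _ _]mxE eqxx mul1r big1 ?addr0 //.
  by move=> j /negbTE hj; rewrite [Sel _ _]mxE hj mul0r.
apply/matrixP => a b.
rewrite mxE !big_ord_recr big_ord0 /= add0r !SW !Psi2EvE !mxE.
case: a => [[|[|a]]] ha //=; case: b => [[|[|b]]] hb //=.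
- by rewrite !phi1d -/s1; field; rewrite lt0r_neq0.
- by rewrite !phi1d -/s1; field; rewrite lt0r_neq0.
- by rewrite !phi2d -/s2; field; rewrite lt0r_neq0.
- by rewrite !phi2d -/s2; field; rewrite lt0r_neq0.
Qed.
End Rank2.

Theorem mainTheorem8 (R : realType) (N : nat) (kappa : R) :
  (4 <= N)%N ->
  Atilde N kappa \in unitmx ->
  eig1_dim (invmx (Atilde N kappa) *m Amat N kappa) = ((N - 3) ^ 2)%N.
Proof.
move=> hN hA.
have hN3 : (3 <= N)%N by lia.
have [uM DY rk] := struct_lemma (leqnn _) (PsiPsi2 R N) (PsiEv R N) (@rank_Psi2Ev R N hN3).
have AX : Amat N kappa - Atilde N kappa =
   massM R N *t (stiffS R N - invmx (massM R N)) + (stiffS R N - invmx (massM R N)) *t massM R N.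
  by apply/matrixP => i j; rewrite !mxE; ring.
rewrite /eig1_dim.
have -> : invmx (Atilde N kappa) *m Amat N kappa - 1%:M
          = invmx (Atilde N kappa) *m (Amat N kappa - Atilde N kappa).
  by rewrite mulmxBr mulVmx.
rewrite mxrank_ker trmx_mul mxrankMfree; last first.
  by rewrite row_free_unit unitmx_tr unitmx_inv.
rewrite mxrank_tr -mxrank_ker AX massME stiffSE DY.
rewrite kron_ker // rk.
by rewrite expnS expn1; congr (_ * _)%N; lia.
Qed.
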